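(* Let $\mathcal{F}$ be a free filter on $\omega$ and let $\kappa$ be a cardinal with $\omega\le\kappa\le\mathfrak{c}$. Then $C_p(X_{\mathcal{F},\kappa})$ is homeomorphic to $(C_\mathcal{F})^\kappa$ (with the product topology).
   Context: A filter on $\omega$ is free if it contains all cofinite sets. $\mathfrak{c}=2^{\aleph_0}$. $X_{\mathcal{F},\kappa}$ is the space $(\kappa\times\omega)\cup\{\infty\}$ in which every point of $\kappa\times\omega$ is isolated and the neighborhoods of $\infty$ are the sets $\{\infty\}\cup\bigcup\{\{\alpha\}\times A_\alpha:\alpha<\kappa\}$ with $A_\alpha\in\mathcal{F}$ for all $\alpha$. $C_p(X)$ is the space of continuous real-valued functions on $X$ with the pointwise convergence topology. $C_\mathcal{F}=\{f\in(-1,1)^\omega:\forall m\in\omega\ \{n\in\omega:|f(n)|<2^{-m}\}\in\mathcal{F}\}$, a subspace of $[-1,1]^\omega$ with the product topology. *)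

(* Defs.v *)
From HB Require Import structures.
From mathcomp Require Import all_boot all_order all_algebra.
From mathcomp Require Import all_classical all_reals all_analysis.
Set Implicit Arguments. Unset Strict Implicit. Unset Printing Implicit Defensive.
Import Order.TTheory GRing.Theory Num.Theory.
Import numFieldTopology.Exports.
Local Open Scope classical_set_scope.
Local Open Scope ring_scope.

(* The underlying set of X_{F,kappa}: (kappa x omega) u {oo}; None plays oo. *)
Definition Xpt (K : Type) := option (K * nat).

(* Open sets of X_{F,kappa}: points of kappa x omega are isolated, and the
   neighbourhoods of oo are {oo} u U_a {a} x A_a with A_a in F. *)
Definition X_open (F : set_system nat) (K : Type) (U : set (Xpt K)) : Prop :=
  U None -> forall a : K, F [set n | U (Some (a, n))].

Definition X_continuous (R : realType) (F : set_system nat) (K : Type)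
  (f : Xpt K -> R) : Prop :=
  forall V : set R, open V -> X_open F (f @^-1` V).

Definition Cp_X (R : realType) (F : set_system nat) (K : Type)
  : set {ptws Xpt K -> R} := [set f | X_continuous F f].

(* C_F as a subset of R^omega (product topology; same subspace topology as in
   [-1,1]^omega). *)
Definition C_F (R : realType) (F : set_system nat) : set {ptws nat -> R} :=
  [set f | (forall n, -1 < f n < 1) /\
           forall m : nat, F [set n | `|f n| < 2%:R ^- m]].

Definition C_F_pow (R : realType) (F : set_system nat) (K : Type)
  : set {ptws K -> {ptws nat -> R}} := [set g | forall a, C_F F (g a)].

Definition homeomorphic_subspaces (T1 T2 : topologicalType)
  (A : set T1) (B : set T2) : Prop :=
  exists (f : T1 -> T2) (g : T2 -> T1),
    (forall x, A x -> B (f x)) /\ (forall y, B y -> A (g y)) /\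
    (forall x, A x -> g (f x) = x) /\ (forall y, B y -> f (g y) = y) /\
    {within A, continuous f} /\ {within B, continuous g}.

(* Main.v *)
Require Import Defs.
From HB Require Import structures.
From mathcomp Require Import all_boot all_order all_algebra.
From mathcomp Require Import all_classical all_reals all_analysis.
From mathcomp Require Import ring lra.
Import numFieldTopology.Exports.
Import numFieldNormedType.Exports.
Import Order.TTheory GRing.Theory Num.Theory.
Local Open Scope classical_set_scope.
Local Open Scope ring_scope.
Set Implicit Arguments.

Lemma ptws_cvgP (I : Type) (T : topologicalType) (F: set_system {ptws I -> T})
  (FF: Filter F) (g : {ptws I -> T}) :
  F --> g <-> forall i, (fun f : {ptws I -> T} => f i) @ F --> g i.
Proof.
rewrite /prod_topology.
rewrite cvg_sup.
split => H i.
- move: (H i) => {}H.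
  move/(cvg_app (fun f : {ptws I -> T} => f i)) : H => /cvg_trans; apply.
  exact: initial_continuous.
- move=> A HA; move: HA; rewrite (@nbhsE (initial_topology (fun f : {ptws I -> T} => f i))) => -[B [[C oC <-] Bg] sA].
  have : nbhs (g i : T) C. rewrite nbhsE. by exists C.
  move/(H i) => HB. have HB2 : F ((fun f : {ptws I -> T} => f i) @^-1` C) := HB. exact: (filterS sA HB2).
Qed.

Lemma eval_cont (I : Type) (T : topologicalType) (i : I) :
  continuous (fun f : {ptws I -> T} => f i).
Proof. move=> f. have := (@ptws_cvgP I T (nbhs f) _ f).1 cvg_id; exact. Qed.

Lemma ptws_for (S : topologicalType) (I : Type) (T : topologicalType)
  (g : S -> {ptws I -> T}) (x : S) :
  (forall i, {for x, continuous (fun y => g y i)}) -> {for x, continuous g}.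
Proof. by move=> H; apply/(@ptws_cvgP I T) => i; apply: H. Qed.

Lemma ptws_cont (S : topologicalType) (I : Type) (T : topologicalType)
  (g : S -> {ptws I -> T}) :
  (forall i, continuous (fun y => g y i)) -> continuous g.
Proof. by move=> H x; apply: ptws_for => i; apply: H. Qed.

Section H.
Variable R : realType.

Definition hh (x : R) : R := x / (1 + `|x|).
Definition hi (y : R) : R := y / (1 - `|y|).

Lemma hh_norm x : `|hh x| = `|x| / (1 + `|x|).
Proof. by rewrite /hh normrM normfV (@ger0_norm _ (1 + _)) // addr_ge0. Qed.

Lemma hh_lt1 x : `|hh x| < 1.
Proof.
rewrite hh_norm ltr_pdivrMr ?mul1r; last by rewrite ltr_pwDl.
by rewrite ltrDr.
Qed.

Lemma hh_le x : `|hh x| <= `|x|.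
Proof.
rewrite hh_norm ler_pdivrMr; last by rewrite ltr_pwDl.
have := normr_ge0 x; nra.
Qed.

Lemma hi_hh x : hi (hh x) = x.
Proof.
rewrite /hi hh_norm /hh.
have d0 : 0 < 1 + `|x| by rewrite ltr_pwDl.
have -> : 1 - `|x| / (1 + `|x|) = 1 / (1 + `|x|).
  by field; rewrite gt_eqF.
by field; rewrite gt_eqF.
Qed.

Lemma hi_norm y : `|y| < 1 -> `|hi y| = `|y| / (1 - `|y|).
Proof.
move=> y1; rewrite /hi normrM normfV (@ger0_norm _ (1 - _)) //.
by rewrite subr_ge0 ltW.
Qed.

Lemma hh_hi y : `|y| < 1 -> hh (hi y) = y.
Proof.
move=> y1; rewrite /hh hi_norm // /hi.
have d0 : 0 < 1 - `|y| by rewrite subr_gt0.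
have -> : 1 + `|y| / (1 - `|y|) = 1 / (1 - `|y|).
  by field; rewrite gt_eqF.
by field; rewrite gt_eqF.
Qed.

Lemma hi_small y : `|y| < 2^-1 -> `|hi y| <= 2 * `|y|.
Proof.
move=> y1; have y1' : `|y| < 1 by apply: (lt_trans y1); rewrite invf_lt1 // ltr1n.
rewrite hi_norm // ler_pdivrMr; last by rewrite subr_gt0.
have := normr_ge0 y.
move: y1; rewrite -[2^-1]/(2^-1 : R).
have -> : (2^-1 : R) = 1/2 by rewrite mul1r.
nra.
Qed.

Lemma hh_cont : continuous hh.
Proof.
move=> x.
have := @continuousM R R (fun x => x) (fun x => (1 + `|x|)^-1) x; apply.
  exact: cvg_id.
apply: continuousV; first by rewrite gt_eqF // ltr_pwDl.
apply: continuousD; first exact: cst_continuous.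
exact: norm_continuous.
Qed.

Lemma hi_cont y : `|y| < 1 -> {for y, continuous hi}.
Proof.
move=> y1.
have := @continuousM R R (fun x => x) (fun x => (1 - `|x|)^-1) y; apply.
  exact: cvg_id.
apply: continuousV; first by rewrite gt_eqF // subr_gt0.
apply: continuousB; first exact: cst_continuous.
exact: norm_continuous.
Qed.

Lemma small_pow (r : R) : 0 < r -> exists m : nat, 2%:R ^- m < r.
Proof.
move=> r0; exists (Num.truncn (r^-1)).+1.
have h1 := truncnS_gt (r^-1).
set k := (Num.truncn (r^-1)).+1 in h1 *.
have h2 : (k < 2 ^ k)%N by apply: ltn_expl.
have h3 : (k%:R : R) < 2%:R ^+ k by rewrite -natrX ltr_nat.
rewrite -(invrK r) ltf_pV2 ?posrE ?exprn_gt0 ?invr_gt0 //.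
exact: lt_trans h1 h3.
Qed.
End H.
Arguments hh {R}.
Arguments hi {R}.
Arguments hh_norm {R}. Arguments hh_lt1 {R}. Arguments hh_le {R}. Arguments hi_hh {R}. Arguments hi_norm {R}. Arguments hh_hi {R}. Arguments hi_small {R}. Arguments hh_cont {R}. Arguments hi_cont {R}. Arguments small_pow {R}.
Set Implicit Arguments.
Section Main.
Variables (K : Type) (e : nat -> K) (einj : injective e).

Definition idx (a : K) : option nat :=
  match pselect (exists i, e i = a) with
  | left H => Some (projT1 (cid H))
  | right _ => None
  end.

Lemma idx_e i : idx (e i) = Some i.
Proof.
rewrite /idx; case: pselect => [H|H]; last by exfalso; apply: H; exists i.
by case: (cid H) => j /= /einj ->.
Qed.

Lemma idx_Some a i : idx a = Some i -> e i = a.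
Proof.
rewrite /idx; case: pselect => [H|//].
by case: (cid H) => j /= ej [<-].
Qed.

Lemma idx_None a i : idx a = None -> e i <> a.
Proof.
rewrite /idx; case: pselect => [//|H] _ ei; apply: H; by exists i.
Qed.

Definition sh (a : K) : option K :=
  match idx a with Some 0 => None | Some i.+1 => Some (e i) | None => Some a end.
Definition th (b : K) : K :=
  match idx b with Some i => e i.+1 | None => b end.

Lemma sh_e0 : sh (e 0) = None.
Proof. by rewrite /sh idx_e. Qed.

Lemma sh_th b : sh (th b) = Some b.
Proof.
rewrite /th; case E: (idx b) => [i|].
  by rewrite /sh idx_e (@idx_Some _ _ E).
by rewrite /sh E.
Qed.

Lemma sh_None a : sh a = None -> a = e 0.
Proof.
rewrite /sh; case E: (idx a) => [[|i]|] //= _.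
by rewrite (@idx_Some _ _ E).
Qed.

Lemma sh_Some a b : sh a = Some b -> th b = a.
Proof.
rewrite /sh; case E: (idx a) => [[|i]|] //= [<-].
  by rewrite /th idx_e (@idx_Some _ _ E).
by rewrite /th E.
Qed.

End Main.

Section Main2.
Variables (R : realType) (F : set_system nat) (K : Type) (e : nat -> K)
  (einj : injective e).
Hypothesis PF : ProperFilter F.
Hypothesis free : forall A : set nat, finite_set (~` A) -> F A.

Definition Phi (f : {ptws Xpt K -> R}) : {ptws K -> {ptws nat -> R}} :=
  fun a n => hh (match n with
                 | 0%N => match sh e a with
                          | None => f None
                          | Some b => f (Some (b, 0%N)) - f None end
                 | _ => f (Some (a, n)) - f None end).

Definition Psi (g : {ptws K -> {ptws nat -> R}}) : {ptws Xpt K -> R} :=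
  fun p => match p with
           | None => hi (g (e 0%N) 0%N)
           | Some (b, 0%N) => hi (g (th e b) 0%N) + hi (g (e 0%N) 0%N)
           | Some (b, n) => hi (g b n) + hi (g (e 0%N) 0%N) end.

Lemma F_pos : F [set n | n <> 0%N].
Proof.
apply: free.
have -> : ~` [set n | n <> 0%N] = [set 0%N].
  by apply/seteqP; split => n /=; [move/contrapT|move=> ->].
exact: finite_set1.
Qed.

Lemma Psi_Phi f : Psi (Phi f) = f.
Proof.
have c0 : hi (Phi f (e 0%N) 0%N) = f None. by rewrite /Phi (sh_e0 einj) hi_hh.
apply: functional_extensionality_dep => -[[b [|n]]|] /=; rewrite ?c0 //.
  by rewrite /Phi (sh_th einj) hi_hh subrK.
by rewrite /Phi hi_hh subrK.
Qed.

Lemma Phi_Psi g : C_F_pow F g -> Phi (Psi g) = g.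
Proof.
move=> Hg; have g1 a n : `|g a n| < 1.
  by have [/(_ n) + _] := Hg a; rewrite ltr_norml.
apply: functional_extensionality_dep => a; apply: functional_extensionality_dep => -[|n]; rewrite /Phi /=.
  case E: (sh e a) => [b|].
    by rewrite (@sh_Some _ _ einj _ _ E) addrK hh_hi.
  by rewrite -(@sh_None _ _ _ E) hh_hi.
by rewrite addrK hh_hi.
Qed.


Lemma eval2_cont (a : K) (n : nat) :
  continuous (fun y : {ptws K -> {ptws nat -> R}} => y a n).
Proof.
move=> x.
apply: (@continuous_comp _ _ _ (fun y : {ptws K -> {ptws nat -> R}} => y a)
  (fun z : {ptws nat -> R} => z n)); exact: eval_cont.
Qed.

Lemma diff_cont (p q : Xpt K) :
  continuous (fun y : {ptws Xpt K -> R} => hh (y p - y q)).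
Proof.
move=> x.
apply: (@continuous_comp _ _ _ (fun y : {ptws Xpt K -> R} => y p - y q) hh);
  last exact: hh_cont.
by apply: continuousB; apply: eval_cont.
Qed.

Lemma Phi_cont : continuous Phi.
Proof.
apply: ptws_cont => a; apply: ptws_cont => -[|n]; rewrite /Phi.
  case: (sh e a) => [b|]; first exact: diff_cont.
  move=> x.
  apply: (@continuous_comp _ _ _ (fun y : {ptws Xpt K -> R} => y None) hh);
    [exact: eval_cont | exact: hh_cont].
exact: diff_cont.
Qed.

Lemma hi_eval_cont x a n : `|x a n| < 1 ->
  {for x, continuous (fun y : {ptws K -> {ptws nat -> R}} => hi (y a n))}.
Proof.
move=> H.
apply: (@continuous_comp _ _ _ (fun y : {ptws K -> {ptws nat -> R}} => y a n) hi);
  [exact: eval2_cont | exact: hi_cont].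
Qed.

Lemma Psi_cont x : C_F_pow F x -> {for x, continuous Psi}.
Proof.
move=> Hg; have g1 a n : `|x a n| < 1.
  by have [/(_ n) + _] := Hg a; rewrite ltr_norml.
apply: ptws_for => -[[b [|n]]|]; rewrite /Psi.
- by apply: continuousD; apply: hi_eval_cont.
- by apply: continuousD; apply: hi_eval_cont.
- exact: hi_eval_cont.
Qed.

Lemma Phi_in f : Cp_X F f -> C_F_pow F (Phi f).
Proof.
move=> Hf a; split.
  by move=> n; rewrite -ltr_norml; exact: hh_lt1.
move=> m; set r : R := 2%:R ^- m.
have r0 : 0 < r by rewrite /r invr_gt0 exprn_gt0.
have V := Hf _ (ball_open (f None) r).
have := V (ballxx _ r0) a => Fa.
apply: filterS (filterI Fa F_pos) => -[|n] /= [Hb Hn] //.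
rewrite /Phi; apply: le_lt_trans (hh_le _) _.
by rewrite distrC; exact: Hb.
Qed.

Lemma Psi_in g : C_F_pow F g -> Cp_X F (Psi g).
Proof.
move=> Hg V oV VN a.
have : nbhs (Psi g None) V by apply: open_nbhs_nbhs; split.
move/nbhs_ballP => [r r0 sV].
have r1 : 0 < Num.min (r / 2) (2^-1 : R).
  by rewrite lt_min; apply/andP; split; [apply: divr_gt0 | rewrite invr_gt0].
have [m Hm] := small_pow _ r1.
move: Hm; rewrite lt_min => /andP[Hm1 Hm2].
apply: filterS (filterI ((Hg a).2 m) F_pos) => -[|n] /= [Hn _] //.
apply: sV; rewrite /ball /=.
have -> : hi (g (e 0%N) 0%N) - (hi (g a n.+1) + hi (g (e 0%N) 0%N)) = - hi (g a n.+1)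
  by ring.
rewrite normrN.
have Hs : `|g a n.+1| < 2^-1 by apply: lt_trans Hn Hm2.
have := hi_small _ Hs.
have := lt_trans Hn Hm1.
lra.
Qed.

End Main2.

Unset Implicit Arguments.
Theorem mainTheorem16 (R : realType) (F : set_system nat) (K : Type)
  (PF : ProperFilter F)
  (free : forall A : set nat, finite_set (~` A) -> F A)
  (kappa_ge_omega : exists e : nat -> K, injective e)
  (kappa_le_c : exists e : K -> (nat -> bool), injective e) :
  homeomorphic_subspaces (@Cp_X R F K) (@C_F_pow R F K).
Proof.
have [e einj] := kappa_ge_omega.
exists (@Phi R K e), (@Psi R K e).
split; first by move=> f Hf; apply: Phi_in.
split; first by move=> g Hg; apply: Psi_in.
split; first by move=> f _; apply: Psi_Phi.
split; first by move=> g Hg; apply: Phi_Psi.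
split; first by apply: continuous_subspaceT; apply: Phi_cont.
apply: continuous_in_subspaceT => x; rewrite inE => Hx.
exact: Psi_cont.
Qed.
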